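(* For every even integer $k\ge 0$ and each sign $\pm$, $h^{\pm}_k(2)=t^{\pm}_k(2)$.
   Context: Fix a permutation $(a,b,c)$ of $(1,2,3)$. $T_\pm$ is the directed graph on vertices $abc,bca,cab$ having both arcs between each pair; the clockwise arcs $abc\to cab$, $cab\to bca$, $bca\to abc$ have sign $+$ and their reverses sign $-$. $H_\pm$ is the directed graph on the $6$-cycle $aba-bcc-aab-cbc-baa-ccb-aba$ with both arcs for each edge; the clockwise direction is $aba\to ccb\to baa\to cbc\to aab\to bcc\to aba$, clockwise arcs have sign $-$ and counterclockwise arcs (their reverses) sign $+$. A walk is positive (negative) if the product of the signs of its arcs is $+$ ($-$). For vertices $x,y$ such that the clockwise path from $x$ to $y$ has length $\ell$, $t^{+}_k(\ell)$ (resp. $t^-_k(\ell)$) is the number of positive (resp. negative) walks of length $k$ from $x$ to $y$ in $T_\pm$, and $h^{\pm}_k(\ell)$ is defined analogously in $H_\pm$. *)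

(* Defs.v *)
From mathcomp Require Import all_boot.
Set Implicit Arguments. Unset Strict Implicit. Unset Printing Implicit Defensive.

(* Vertices of a directed n-cycle are 'I_n, listed in clockwise order:
   the clockwise successor of u is [cw u] (value (u+1) mod n).
   T_pm : n = 3, vertices 0 = abc, 1 = cab, 2 = bca
          (clockwise arcs abc->cab->bca->abc).
   H_pm : n = 6, vertices 0 = aba, 1 = ccb, 2 = baa, 3 = cbc, 4 = aab, 5 = bcc
          (clockwise arcs aba->ccb->baa->cbc->aab->bcc->aba).
   In both graphs the arcs are exactly the clockwise arcs u -> cw u and their
   reverses cw u -> u. Signs are booleans: true = +, false = -. *)

Definition cw n (u : 'I_n) : 'I_n := ordS u.

Definition cycle_arc n (u v : 'I_n) : bool := (v == cw u) || (u == cw v).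

Definition signT (u v : 'I_3) : bool := v == cw u.
Definition signH (u v : 'I_6) : bool := ~~ (v == cw u).

(* A walk of length k from x is given by the k.-tuple of vertices visited
   after x; its arcs are consecutive pairs. *)
Definition is_walk n (x : 'I_n) k (w : k.-tuple 'I_n) (y : 'I_n) : bool :=
  path (@cycle_arc n) x w && (last x w == y).

Definition walk_sign n (sgn : 'I_n -> 'I_n -> bool) (x : 'I_n) (w : seq 'I_n) : bool :=
  ~~ odd (count id (pairmap (fun u v => ~~ sgn u v) x w)).

Definition nwalks n (sgn : 'I_n -> 'I_n -> bool) (s : bool) (k : nat) (x y : 'I_n) : nat :=
  #|[set w : k.-tuple 'I_n | is_walk x w y && (walk_sign sgn x w == s)]|.

Definition cwdist n (x y : 'I_n) : nat := (y + n - x) %% n.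

(* Main.v *)
Require Import Defs.
From mathcomp Require Import all_boot zify.


Definition nextn n x := if x.+1 == n then 0 else x.+1.
Definition prevn n x := if x is x'.+1 then x' else n.-1.
Fixpoint G n (sg : nat -> nat -> bool) k s x y : nat :=
  match k with
  | 0 => s && (x == y)
  | k'.+1 => G n sg k' (s == sg x (nextn n x)) (nextn n x) y
           + G n sg k' (s == sg x (prevn n x)) (prevn n x) y
  end.
Definition sgT u v := v == nextn 3 u.
Definition sgH u v := v != nextn 6 u.

Definition Inv k := forall s,
  G 3 sgT k s 2 0 = G 3 sgT k s 1 0 /\ G 6 sgH k s 0 0 = G 3 sgT k s 0 0 /\
      G 6 sgH k s 1 0 = 0 /\ G 6 sgH k s 2 0 = G 3 sgT k s 1 0 /\
      G 6 sgH k s 3 0 = 0 /\ G 6 sgH k s 4 0 = G 3 sgT k s 1 0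
    /\ G 6 sgH k s 5 0 = 0.

Lemma Inv_step k : Inv k -> Inv k.+2.
Proof.
move=> H s.
have [a1 [a2 [a3 [a4 [a5 [a6 a7]]]]]] := H true.
have [b1 [b2 [b3 [b4 [b5 [b6 b7]]]]]] := H false.
clear H; move: a1 a2 a3 a4 a5 a6 a7 b1 b2 b3 b4 b5 b6 b7.
case: s; simpl; generalize (G 3 sgT) (G 6 sgH) => GT GH;
  cbv [nextn sgT sgH]; cbn; intros; repeat split.

all: try lia.

Qed.

Lemma Inv_even m : Inv m.*2.
Proof.
elim: m => [|m IH]; first by rewrite /Inv; case; simpl; repeat split.
rewrite doubleS; exact: Inv_step.
Qed.

Lemma nextn_lt n x : x < n -> nextn n x < n.
Proof. rewrite /nextn; case: eqP; lia. Qed.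
Lemma prevn_lt n x : 0 < n -> x < n -> prevn n x < n.
Proof. rewrite /prevn; case: x; lia. Qed.
Lemma val_cw n (u : 'I_n) : val (cw u) = nextn n u.
Proof.
rewrite /cw /ordS /= /nextn; case: eqP => [->|h]; first by rewrite modnn.
rewrite modn_small //; have := ltn_ord u; lia.
Qed.
Lemma nextn_eq n u w : u < n -> w < n -> (w == nextn n u) = (u == prevn n w).
Proof.
move=> hu hw; rewrite /nextn /prevn; case: (u.+1 =P n) => h; move: hw; case: w => [|w] hw;
 apply/eqP/eqP; lia.
Qed.
Lemma nextn_prevn n a : 2 < n -> a < n -> nextn n a != prevn n a.
Proof. move=> hn ha; rewrite /nextn /prevn; case: (a.+1 =P n); case: a ha => [|a] ha h; apply/eqP; lia. Qed.
Lemma nextn_inj n a b : a < n -> b < n -> (nextn n a == nextn n b) = (a == b).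
Proof. move=> ha hb; rewrite /nextn; case: (a.+1 =P n); case: (b.+1 =P n); move=> h1 h2; apply/eqP/eqP; lia. Qed.
Lemma prevn_nextn n x : x < n -> prevn n (nextn n x) = nextn n (prevn n x).
Proof. move=> hx; rewrite /nextn /prevn; case: (x.+1 =P n) => h; move: hx h; case: x => [|x] hx h; try case: eqP; lia. Qed.

Lemma arcE n (x v : 'I_n) :
  cycle_arc x v = (val v == nextn n x) || (val v == prevn n x).
Proof.
rewrite /cycle_arc -!val_eqE !val_cw (@nextn_eq n v x (ltn_ord v) (ltn_ord x)).
by [].
Qed.

Lemma sum_ind n (a : nat) (g : nat -> nat) : \sum_(i < n) ((i : nat) == a) * g i = (a < n) * g a.
Proof.
elim: n => [|n IH]; first by rewrite big_ord0.
rewrite big_ord_recr /= IH.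
case: (ltngtP a n) => [h|h|->] /=.
- have -> : a < n.+1 by lia.
  by rewrite addn0.
- have -> : (a < n.+1) = false by lia.
  by rewrite addn0.
- by rewrite ltnSn.
Qed.

Lemma sum_two n (a b : nat) (g : nat -> nat) : a != b ->
  \sum_(i < n) (((i:nat) == a) || ((i:nat) == b)) * g i = (a < n) * g a + (b < n) * g b.
Proof.
move=> hab.
rewrite (eq_bigr (fun i : 'I_n => ((i:nat) == a) * g i + ((i:nat) == b) * g i)).
  by rewrite big_split /= !sum_ind.
move=> i _; case: ((i:nat) =P a) => [->|ha]; first by rewrite (negbTE hab) /= addn0.
by case: ((i:nat) =P b).
Qed.

Lemma nwalksE n (sgn : 'I_n -> 'I_n -> bool) (sg : nat -> nat -> bool) :
  2 < n -> (forall u v : 'I_n, sgn u v = sg u v) ->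
  forall k s (x y : 'I_n), nwalks sgn s k x y = G n sg k s x y.
Proof.
move=> hn hsg; elim=> [|k IH] s x y.
  rewrite /nwalks (_ : [set w : 0.-tuple 'I_n | _] = if s && (x == y) then setT else set0).
    rewrite /= val_eqE; case: (s && (x == y)).
      by rewrite cardsT card_tuple.
    by rewrite cards0.
  apply/setP => w; rewrite (tuple0 w) inE /is_walk /walk_sign /=.
  by case: s; case: (x == y); rewrite ?inE.
rewrite /nwalks -sum1_card big_mkcond /=.
rewrite (reindex (fun p : 'I_n * k.-tuple 'I_n => [tuple of p.1 :: p.2])) /=; last first.
  exists (fun w : k.+1.-tuple 'I_n => (thead w, behead_tuple w)) => [[v t] _ | w _].
    by congr pair; apply/val_inj.
  by case/tupleP: w => v t; apply/val_inj.
rewrite -(pair_bigA _ (fun v (t : k.-tuple 'I_n) => if [tuple of v :: t] \in [set w : k.+1.-tuple 'I_n | is_walk x w y && (walk_sign sgn x w == s)] then 1 else 0)).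
rewrite (eq_bigr (fun v : 'I_n => (((v:nat) == nextn n x) || ((v:nat) == prevn n x)) * G n sg k (s == sg x v) v y)).
  rewrite [X in X = _](_ : _ = \sum_(i<n) (((i:nat)==nextn n x)||((i:nat)==prevn n x)) * G n sg k (s == sg x i) i y) //.
  rewrite (@sum_two n _ _ (fun j => G n sg k (s == sg x j) j y)); last exact: nextn_prevn.
  by rewrite nextn_lt // prevn_lt ?mul1n //; lia.
move=> v _; rewrite -arcE -IH -hsg /nwalks -sum1_card.
have mem (t : k.-tuple 'I_n) : ([tuple of v :: t] \in [set w : k.+1.-tuple 'I_n | is_walk x w y && (walk_sign sgn x w == s)]) =
   cycle_arc x v && (t \in [set t : k.-tuple 'I_n | is_walk v t y && (walk_sign sgn v t == (s == sgn x v))]).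
  rewrite !inE /is_walk /walk_sign /= oddD oddb.
  case: (cycle_arc x v); case: (sgn x v); case: s; case: (odd _); by rewrite /= ?andbF ?andbT.
under eq_bigr => t _ do rewrite mem.
case: (cycle_arc x v) => /=.
  by rewrite mul1n [RHS]big_mkcond.
by rewrite mul0n big1.
Qed.

Lemma G_rot n sg : 0 < n ->
  (forall u v, u < n -> v < n -> sg (nextn n u) (nextn n v) = sg u v) ->
  forall k s x y, x < n -> y < n -> G n sg k s (nextn n x) (nextn n y) = G n sg k s x y.
Proof.
move=> hn hs; elim=> [|k IH] s x y hx hy /=.
  by rewrite nextn_inj.
rewrite hs ?nextn_lt // IH ?nextn_lt //.
by rewrite prevn_nextn // hs ?prevn_lt // IH ?prevn_lt.
Qed.

Lemma iter_lt n j y : y < n -> iter j (nextn n) y < n.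
Proof. move=> hy; elim: j => [//|j IH] /=; exact: nextn_lt. Qed.

Lemma G_shift n sg : 0 < n ->
  (forall u v, u < n -> v < n -> sg (nextn n u) (nextn n v) = sg u v) ->
  forall k s j y, y < n -> G n sg k s (iter j (nextn n) y) y = G n sg k s (iter j (nextn n) 0) 0.
Proof.
move=> hn hs k s j; elim=> [//|y IH] hy.
have e : y.+1 = nextn n y by rewrite /nextn; case: eqP; lia.
rewrite e -iterSr iterS G_rot ?IH ?iter_lt //; lia.
Qed.

Lemma sgT_rot u v : u < 3 -> v < 3 -> sgT (nextn 3 u) (nextn 3 v) = sgT u v.
Proof. move=> hu hv; rewrite /sgT nextn_inj ?nextn_lt //. Qed.
Lemma sgH_rot u v : u < 6 -> v < 6 -> sgH (nextn 6 u) (nextn 6 v) = sgH u v.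
Proof. move=> hu hv; rewrite /sgH nextn_inj ?nextn_lt //. Qed.

Lemma distT (x y : 'I_3) : cwdist x y = 2 -> val x = nextn 3 y.
Proof.
case: x => [[|[|[|x]]] hx] //; case: y => [[|[|[|y]]] hy] //;
  rewrite /cwdist /=; move=> h; vm_compute in h; try discriminate; by vm_compute.
Qed.
Lemma distH (x y : 'I_6) : cwdist x y = 2 -> val x = iter 4 (nextn 6) y.
Proof.
case: x => [[|[|[|[|[|[|x]]]]]] hx] //; case: y => [[|[|[|[|[|[|y]]]]]] hy] //;
  rewrite /cwdist /=; move=> h; vm_compute in h; try discriminate; by vm_compute.
Qed.

Theorem lemma12 (k : nat) (s : bool) :
  ~~ odd k ->
  forall (x y : 'I_3) (x' y' : 'I_6),
    cwdist x y = 2 -> cwdist x' y' = 2 ->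
    nwalks signH s k x' y' = nwalks signT s k x y.
Proof.
move=> hk x y x' y' hT hH.
rewrite (@nwalksE 6 signH sgH) //; last by move=> u v; rewrite /signH /sgH -val_eqE val_cw.
rewrite (@nwalksE 3 signT sgT) //; last by move=> u v; rewrite /signT /sgT -val_eqE val_cw.
rewrite (@distT x y hT) (@distH x' y' hH).
rewrite (_ : nextn 3 y = iter 1 (nextn 3) y) // (@G_shift 3 sgT erefl sgT_rot k s 1 y (ltn_ord y)).
rewrite (@G_shift 6 sgH erefl sgH_rot k s 4 y' (ltn_ord y')).
change (iter 1 (nextn 3) 0) with 1; change (iter 4 (nextn 6) 0) with 4.
rewrite -(odd_double_half k) (negbTE hk) add0n.
by have [_ [_ [_ [_ [_ [h _]]]]]] := Inv_even k./2 s.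
Qed.
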